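(* Let $n,m\ge1$, let $K\subset\mathbb{R}^n$ be compact, let $f:K\to\mathbb{R}$ be continuous and $\varepsilon>0$. Then there exists an IWCNN $f_\theta=g^{\mathrm{ICNN}}_{\theta_1}\circ g^{\mathrm{sm}}_{\theta_2}$ with intermediate dimension $m$ (i.e. $g^{\mathrm{sm}}_{\theta_2}:\mathbb{R}^n\to\mathbb{R}^m$ and $g^{\mathrm{ICNN}}_{\theta_1}:\mathbb{R}^m\to\mathbb{R}$) such that $\sup_{x\in K}|f_\theta(x)-f(x)|<\varepsilon$.
   Context: An input convex neural network (ICNN) $g:\mathbb{R}^m\to\mathbb{R}$ is a feedforward network $z_1=\sigma(W_0^{(y)}u+b_0)$, $z_{i+1}=\sigma(W_i^{(z)}z_i+W_i^{(y)}u+b_i)$, output $g(u)=z_L$ (final layer affine allowed), with nonnegative weight matrices $W_i^{(z)}$ and \texttt{ReLU} (or other convex nondecreasing) activations $\sigma$, so that $g$ is convex in its input $u$. $g^{\mathrm{sm}}:\mathbb{R}^n\to\mathbb{R}^m$ is a feedforward neural network (of arbitrary depth) whose activation functions are nonaffine, continuously differentiable with Lipschitz derivative (e.g. SiLU). An input weakly convex neural network (IWCNN) is a composition $g^{\mathrm{ICNN}}\circ g^{\mathrm{sm}}$ of such networks. *)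

(* Defs.v *)
From HB Require Import structures.
From mathcomp Require Import all_boot all_order all_algebra.
From mathcomp Require Import all_classical all_reals all_analysis.
Set Implicit Arguments. Unset Strict Implicit. Unset Printing Implicit Defensive.
Import Order.TTheory GRing.Theory Num.Theory.
Local Open Scope ring_scope.

Section Nets.
Variable R : realType.

Definition relu (x : R) : R := Num.max x 0.

Inductive ffn (m : nat) : nat -> Type :=
| ffn_out (n : nat) : 'M[R]_(m, n) -> 'cV[R]_m -> ffn m n
| ffn_layer (n k : nat) : 'M[R]_(k, n) -> 'cV[R]_k -> ffn m k -> ffn m n.

Fixpoint ffn_eval (sigma : R -> R) (m n : nat) (N : ffn m n) : 'cV[R]_n -> 'cV[R]_m :=
  match N in ffn _ n return 'cV[R]_n -> 'cV[R]_m with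
  | ffn_out _ A b => fun x => A *m x + b
  | ffn_layer _ _ A b N' => fun x => ffn_eval sigma N' (map_mx sigma (A *m x + b))
  end.

(* admissible activation for g^sm: nonaffine, differentiable with Lipschitz
   derivative (hence continuously differentiable). *)
Definition sm_activation (sigma : R -> R) : Prop :=
  [/\ ~ (exists a b : R, forall x, sigma x = a * x + b),
      (forall x, derivable sigma x 1) &
      exists L : R, forall x y, `|derive1 sigma x - derive1 sigma y| <= L * `|x - y| ].

(* [icnn_tail m k] : the layers after z_1, where k is the width of the current z. *)
Inductive icnn_tail (m : nat) : nat -> Type :=
| ic_out (k : nat) (act : bool) :
    'M[R]_(1, k) -> 'M[R]_(1, m) -> 'cV[R]_1 -> icnn_tail m k
| ic_layer (k k' : nat) :
    'M[R]_(k', k) -> 'M[R]_(k', m) -> 'cV[R]_k' -> icnn_tail m k' -> icnn_tail m k.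

Inductive icnn (m : nat) : Type :=
| icnn_single (act : bool) : 'M[R]_(1, m) -> 'cV[R]_1 -> icnn m
| icnn_deep (k : nat) : 'M[R]_(k, m) -> 'cV[R]_k -> icnn_tail m k -> icnn m.

Definition opt_relu (act : bool) (x : R) : R := if act then relu x else x.

Fixpoint icnn_tail_eval (m k : nat) (T : icnn_tail m k) (u : 'cV[R]_m)
  : 'cV[R]_k -> R :=
  match T in icnn_tail _ k return 'cV[R]_k -> R with
  | ic_out _ act Wz Wy b => fun z => opt_relu act ((Wz *m z + Wy *m u + b) ord0 ord0)
  | ic_layer _ _ Wz Wy b T' =>
      fun z => icnn_tail_eval T' u (map_mx relu (Wz *m z + Wy *m u + b))
  end.

Definition icnn_eval (m : nat) (N : icnn m) (u : 'cV[R]_m) : R :=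
  match N with
  | icnn_single act W0 b0 => opt_relu act ((W0 *m u + b0) ord0 ord0)
  | icnn_deep _ W0 b0 T => icnn_tail_eval T u (map_mx relu (W0 *m u + b0))
  end.

Fixpoint icnn_tail_nonneg (m k : nat) (T : icnn_tail m k) : Prop :=
  match T with
  | ic_out _ _ Wz _ _ => forall i j, 0 <= Wz i j
  | ic_layer _ _ Wz _ _ T' => (forall i j, 0 <= Wz i j) /\ icnn_tail_nonneg T'
  end.

Definition icnn_nonneg (m : nat) (N : icnn m) : Prop :=
  match N with
  | icnn_single _ _ _ => True
  | icnn_deep _ _ _ T => icnn_tail_nonneg T
  end.

End Nets.

(* Main.v *)
Require Import Defs.
From HB Require Import structures.
From mathcomp Require Import all_boot all_order all_algebra.
From mathcomp Require Import all_classical all_reals all_analysis.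
From mathcomp Require Import finmap.
From mathcomp Require Import ring lra.
Import Order.TTheory GRing.Theory Num.Theory.
Import numFieldNormedType.Exports.
Local Open Scope classical_set_scope.
Local Open Scope ring_scope.
Set Implicit Arguments. Unset Strict Implicit.


Section NetLib.
Variable R : realType.
Definition sq (x : R) := x * x.

Definition ffn_pre m n p (N : ffn R m n) : 'M[R]_(n, p) -> 'cV[R]_n -> ffn R m p :=
  match N in ffn _ _ n return 'M[R]_(n, p) -> 'cV[R]_n -> ffn R m p with
  | ffn_out _ A b => fun C d => ffn_out (A *m C) (A *m d + b)
  | ffn_layer _ _ A b N' => fun C d => ffn_layer (A *m C) (A *m d + b) N'
  end.

Lemma eval_pre s m n p (N : ffn R m n) (C : 'M[R]_(n, p)) d x :
  ffn_eval s (ffn_pre N C d) x = ffn_eval s N (C *m x + d).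
Proof. by case: N C d => [? A b|? ? A b N'] C d /=; rewrite mulmxDr mulmxA addrA. Qed.

Fixpoint ffn_comp l m n (N2 : ffn R l m) (N1 : ffn R m n) : ffn R l n :=
  match N1 in ffn _ _ n return ffn R l n with
  | ffn_out _ A b => ffn_pre N2 A b
  | ffn_layer _ _ A b N1' => ffn_layer A b (ffn_comp N2 N1')
  end.

Lemma eval_comp s l m n (N2 : ffn R l m) (N1 : ffn R m n) x :
  ffn_eval s (ffn_comp N2 N1) x = ffn_eval s N2 (ffn_eval s N1 x).
Proof. by elim: N1 x => [? A b|? ? A b N1' IH] x /=; rewrite ?eval_pre ?IH. Qed.

Definition dupM j : 'M[R]_(j + j, j) := col_mx 1%:M 1%:M.
Definition dupb j : 'cV[R]_(j + j) := col_mx (const_mx 1) (const_mx (-1)).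
Definition Qm j : 'M[R]_(j, j + j) := row_mx (4^-1 *: 1%:M) (- 4^-1 *: 1%:M).

Lemma idtrick j (x : 'cV[R]_j) : Qm j *m map_mx sq (dupM j *m x + dupb j) = x.
Proof.
rewrite /dupM /dupb mul_col_mx add_col_mx map_col_mx /Qm mul_row_col.
rewrite -!scalemxAl !mul1mx; apply/matrixP => i k; rewrite !mxE /sq.
by field.
Qed.

Fixpoint par_outL k1 k2 j2 (N2 : ffn R k2 j2) : forall j1, 'M[R]_(k1, j1) -> 'cV[R]_k1 -> ffn R (k1 + k2) (j1 + j2) :=
  match N2 in ffn _ _ j2 return forall j1, 'M[R]_(k1, j1) -> 'cV[R]_k1 -> ffn R (k1 + k2) (j1 + j2) with
  | ffn_out _ A2 b2 => fun j1 A1 b1 => ffn_out (block_mx A1 0 0 A2) (col_mx b1 b2)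
  | ffn_layer _ _ A2 b2 N2' => fun j1 A1 b1 =>
      ffn_layer (block_mx (dupM j1) 0 0 A2) (col_mx (dupb j1) b2) (par_outL N2' (A1 *m Qm j1) b1)
  end.

Lemma eval_par_outL k1 k2 j2 (N2 : ffn R k2 j2) j1 (A1 : 'M[R]_(k1, j1)) b1 u v :
  ffn_eval sq (par_outL N2 A1 b1) (col_mx u v) = col_mx (A1 *m u + b1) (ffn_eval sq N2 v).
Proof.
elim: N2 j1 A1 b1 u v => [? A2 b2|? ? A2 b2 N2' IH] j1 A1 b1 u v /=.
  by rewrite mul_block_col !mul0mx addr0 add0r add_col_mx.
rewrite mul_block_col !mul0mx addr0 add0r add_col_mx map_col_mx IH.
by rewrite -mulmxA idtrick.
Qed.

Fixpoint par_outR k1 j1 (N1 : ffn R k1 j1) : forall k2 j2, 'M[R]_(k2, j2) -> 'cV[R]_k2 -> ffn R (k1 + k2) (j1 + j2) :=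
  match N1 in ffn _ _ j1 return forall k2 j2, 'M[R]_(k2, j2) -> 'cV[R]_k2 -> ffn R (k1 + k2) (j1 + j2) with
  | ffn_out _ A1 b1 => fun k2 j2 A2 b2 => ffn_out (block_mx A1 0 0 A2) (col_mx b1 b2)
  | ffn_layer _ _ A1 b1 N1' => fun k2 j2 A2 b2 =>
      ffn_layer (block_mx A1 0 0 (dupM j2)) (col_mx b1 (dupb j2)) (par_outR N1' (A2 *m Qm j2) b2)
  end.

Lemma eval_par_outR k1 j1 (N1 : ffn R k1 j1) k2 j2 (A2 : 'M[R]_(k2, j2)) b2 u v :
  ffn_eval sq (par_outR N1 A2 b2) (col_mx u v) = col_mx (ffn_eval sq N1 u) (A2 *m v + b2).
Proof.
elim: N1 k2 j2 A2 b2 u v => [? A1 b1|? ? A1 b1 N1' IH] k2 j2 A2 b2 u v /=.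
  by rewrite mul_block_col !mul0mx addr0 add0r add_col_mx.
rewrite mul_block_col !mul0mx addr0 add0r add_col_mx map_col_mx IH.
by rewrite -mulmxA idtrick.
Qed.

Fixpoint ffn_par k1 j1 (N1 : ffn R k1 j1) k2 j2 (N2 : ffn R k2 j2) {struct N1} : ffn R (k1 + k2) (j1 + j2) :=
  match N1 in ffn _ _ j1 return ffn R (k1 + k2) (j1 + j2) with
  | ffn_out _ A1 b1 => par_outL N2 A1 b1
  | ffn_layer _ _ A1 b1 N1' =>
     match N2 in ffn _ _ j2 return ffn R (k1 + k2) (_ + j2) with
     | ffn_out _ A2 b2 => par_outR (ffn_layer A1 b1 N1') A2 b2
     | ffn_layer _ _ A2 b2 N2' => ffn_layer (block_mx A1 0 0 A2) (col_mx b1 b2) (ffn_par N1' N2')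
     end
  end.

Lemma eval_par k1 j1 (N1 : ffn R k1 j1) k2 j2 (N2 : ffn R k2 j2) u v :
  ffn_eval sq (ffn_par N1 N2) (col_mx u v) = col_mx (ffn_eval sq N1 u) (ffn_eval sq N2 v).
Proof.
elim: N1 k2 j2 N2 u v => [? A1 b1|? ? A1 b1 N1' IH] k2 j2 N2 u v.
  by rewrite /= eval_par_outL.
move: v; case: N2 => [? A2 b2|? ? A2 b2 N2'] v.
  by rewrite (_ : ffn_par _ _ = par_outR (ffn_layer A1 b1 N1') A2 b2) // eval_par_outR.
by rewrite /= mul_block_col !mul0mx addr0 add0r add_col_mx map_col_mx IH.
Qed.

End NetLib.


Section NetF.
Variable R : realType.
Variable n : nat.

Definition netF (F : 'cV[R]_n -> R) :=
  exists N : ffn R 1 n, forall x, ffn_eval (@sq R) N x ord0 ord0 = F x.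

Lemma netF_const c : netF (fun _ => c).
Proof. by exists (ffn_out 0 c%:M) => x /=; rewrite mul0mx add0r mxE. Qed.

Lemma netF_coord i : netF (fun x => x i ord0).
Proof.
exists (ffn_out (delta_mx ord0 i) 0) => x /=.
by rewrite addr0 -rowE mxE.
Qed.

Definition pairN (N1 N2 : ffn R 1 n) : ffn R (1 + 1) n :=
  ffn_pre (ffn_par N1 N2) (col_mx 1%:M 1%:M) 0.

Lemma eval_pairN N1 N2 x :
  ffn_eval (@sq R) (pairN N1 N2) x = col_mx (ffn_eval (@sq R) N1 x) (ffn_eval (@sq R) N2 x).
Proof. by rewrite /pairN eval_pre mul_col_mx mul1mx addr0 eval_par. Qed.

Lemma netF_add F G : netF F -> netF G -> netF (fun x => F x + G x).
Proof.
move=> [N1 H1] [N2 H2].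
exists (ffn_comp (ffn_out (row_mx 1%:M 1%:M : 'M[R]_(1, 1 + 1)) 0) (pairN N1 N2)) => x.
rewrite eval_comp eval_pairN /= mul_row_col !mul1mx addr0 mxE H1 H2 //.
Qed.

Definition mulnet : ffn R 1 (1 + 1) :=
  ffn_layer (col_mx (row_mx 1%:M 1%:M) (row_mx 1%:M (-1)%:M) : 'M[R]_(1 + 1, 1 + 1)) 0
    (ffn_out (row_mx (4^-1)%:M (- 4^-1)%:M) 0).

Lemma netF_mul F G : netF F -> netF G -> netF (fun x => F x * G x).
Proof.
move=> [N1 H1] [N2 H2].
exists (ffn_comp mulnet (pairN N1 N2)) => x.
rewrite eval_comp eval_pairN /= mul_col_mx !mul_row_col !addr0 map_col_mx mul_row_col.
rewrite !mul_scalar_mx !mxE H1 H2 /sq.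
by field.
Qed.

Lemma netF_sum I (r : seq I) (F : I -> 'cV[R]_n -> R) :
  (forall i, netF (F i)) -> netF (fun x => \sum_(i <- r) F i x).
Proof.
move=> HF; elim: r => [|i r IH].
  by under eq_fun do rewrite big_nil; exact: netF_const.
under eq_fun do rewrite big_cons; exact: netF_add.
Qed.

Lemma netF_ext F G : netF F -> (forall x, F x = G x) -> netF G.
Proof. by move=> [N H] e; exists N => x; rewrite H e. Qed.

End NetF.


Section Approx.
Variable R : realType.

Fixpoint pk (k : nat) (t : R) : R :=
  if k is k'.+1 then pk k' t + (t * t - pk k' t * pk k' t) / 2 else 0.

Lemma pk_bounds k t : `|t| <= 1 ->
  [/\ 0 <= pk k t, pk k t <= `|t| & `|t| - pk k t <= `|t| * (1 - `|t| / 2) ^+ k].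
Proof.
move=> t1.
have ta : t * t = `|t| * `|t| by rewrite -normrM ger0_norm // -expr2 sqr_ge0.
have a0 : 0 <= `|t| by [].
elim: k => [|k [h1 h2 h3]] /=; first by rewrite expr0 mulr1 subr0; split.
set a := `|t| in t1 a0 ta h2 h3 *; set p := pk k t in h1 h2 h3 *.
set c := (1 - a / 2) ^+ k in h3 *.
have c0 : 0 <= c by rewrite /c exprn_ge0 //; lra.
rewrite ta exprSr -/c.
have e : a - (p + (a * a - p * p) / 2) = (a - p) * (1 - (a + p) / 2) by field.
have hq : 0 <= a - p by lra.
have hf : 0 <= 1 - (a + p) / 2 by lra.
have hf2 : 1 - (a + p) / 2 <= 1 - a / 2 by lra.
split.
- have : 0 <= a * a - p * p by nra. lra.
- have := mulr_ge0 hq hf; lra.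
- rewrite e. 
  apply: (le_trans (ler_wpM2l hq hf2)).
  rewrite mulrA; apply: ler_wpM2r; first lra.
  by [].
Qed.

Lemma bern_bound (b : R) k : 0 <= b <= 1 -> (1 - b) ^+ k * (1 + k%:R * b) <= 1.
Proof.
move=> hb; elim: k => [|k IH]; first by rewrite expr0 mul0r addr0 mulr1.
rewrite exprSr -mulrA.
apply: le_trans IH; apply: ler_wpM2l; first by rewrite exprn_ge0 //; lra.
rewrite -natr1. have : 0 <= k%:R :> R by []. nra.
Qed.

Lemma pow_mono (c d : R) k : 0 <= c -> c <= d -> c ^+ k <= d ^+ k.
Proof.
move=> c0 cd; elim: k => [|k IH]; first by [].
rewrite !exprSr; apply: ler_pM => //; exact: exprn_ge0.
Qed.

Lemma approx_abs (e : R) : 0 < e -> exists k, forall t, `|t| <= 1 -> `| pk k t - `|t| | <= e.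
Proof.
move=> e0.
pose k := (Num.trunc (2 / (e * e))).+1.
have hk : 2 / (e * e) < k%:R by exact: truncnS_gt.
exists k => t t1.
have [h1 h2 h3] := pk_bounds k t1.
rewrite distrC ger0_norm; last lra.
have [ae|ae] := leP `|t| e; first lra.
apply: (le_trans h3).
have c1 : (1 - `|t| / 2) ^+ k <= (1 - e / 2) ^+ k by apply: pow_mono; lra.
have hb := @bern_bound (e / 2) k.
have hb' : (1 - e / 2) ^+ k * (1 + k%:R * (e / 2)) <= 1 by apply: hb; lra.
have c0 : 0 <= (1 - `|t| / 2) ^+ k by apply: exprn_ge0; lra.
have ke : 1 / e <= k%:R * (e / 2).
  have : 2 / (e * e) * (e / 2) = 1 / e by field; lra.
  move=> <-; apply: ler_wpM2r; lra.
have ee : 1 / e * e = 1 by field; lra.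
set q := (1 - e / 2) ^+ k in c1 hb'.
have q0 : 0 <= q by apply: (le_trans c0).
have : q * (1 / e) <= 1.
  apply: le_trans hb'; apply: ler_wpM2l => //; lra.
move=> hq.
have : q <= e.
  have : q * (1 / e) * e <= e by rewrite -[leRHS]mul1r; apply: ler_wpM2r; lra.
  by rewrite -mulrA ee mulr1.
nra.
Qed.

End Approx.


Section T.
Variable R : realType.
Variable n : nat.

Lemma ball_entries (x y : 'cV[R]_n) e : ball x e y <-> 0 < e /\ forall i, `|x i ord0 - y i ord0| < e.
Proof.
split.
  case=> e0 H; split => // i; have := H i ord0. by rewrite /ball /= .
case=> e0 H; split => // i j; rewrite (ord1 j); exact: H.
Qed.

Lemma cont_delta (K : set 'cV[R]_n) (f : 'cV[R]_n -> R) y (e : R) :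
  {within K, continuous f} -> K y -> 0 < e ->
  exists2 d, 0 < d & forall x, K x -> ball y d x -> `|f x - f y| < e.
Proof.
move=> fc Ky e0.
have := fc y. move/cvgr_dist_lt/(_ e e0) => H.
have : within K (nbhs y) (fun t => `|f y - f t| < e) by rewrite nbhs_subspace_in.
case/nbhs_ballP => d d0 H0; exists d => // x Kx bx.
by rewrite distrC; apply: H0.
Qed.
End T.


Section Main1.
Variable R : realType.

Lemma sqE : @sq R = (@GRing.exp R ^~ 2).
Proof. by apply/funext => x; rewrite /sq expr2. Qed.

Lemma sq_act : sm_activation (@sq R).
Proof.
split.
- move=> [a [b H]]; move: (H 0) (H 1) (H (-1)); rewrite /sq; lra.
- by move=> x; rewrite sqE; exact: exprn_derivable.
- exists 2 => x y; rewrite sqE !exp_derive1 /= !expr1 -scalerBr normrZ ger0_norm //.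
Qed.

Variable n : nat.

Lemma netF_pk (F : 'cV[R]_n -> R) k : netF F -> netF (fun x => pk k (F x)).
Proof.
move=> hF; elim: k => [|k IH] /=; first exact: netF_const.
apply: netF_add => //; apply: netF_mul; last exact: netF_const.
apply: netF_add; first exact: netF_mul.
apply: (@netF_ext _ _ (fun x => (-1) * (pk k (F x) * pk k (F x)))); last by move=> x; rewrite mulN1r.
by apply: netF_mul; [exact: netF_const| exact: netF_mul].
Qed.

Lemma maxE2 (x y : R) : Num.max x y = (x + y + `|x - y|) / 2.
Proof.
have [xy|xy] := leP x y.
  rewrite ler0_norm; last lra. by field.
rewrite gtr0_norm; last lra. by field.
Qed.

Lemma max_step (A : set 'cV[R]_n) (a b : 'cV[R]_n -> R) (C eta : R) :
  netF a -> 0 < eta -> eta <= 1 -> 0 <= C ->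
  (forall x, A x -> `|a x| <= C /\ `|b x| <= C) ->
  (forall eta', 0 < eta' -> eta' <= 1 ->
     exists b', netF b' /\ forall x, A x -> `|b' x - b x| <= eta') ->
  exists F, netF F /\ forall x, A x -> `|F x - Num.max (a x) (b x)| <= eta.
Proof.
move=> na e0 e1 C0 hab hb.
pose D := 2 * C + 2.
have D0 : 0 < D by rewrite /D; lra.
have [k hk] := approx_abs (divr_gt0 e0 D0).
have [b' [nb' hb']] := hb (eta / 2) ltac:(lra) ltac:(lra).
exists (fun x => (a x + b' x + D * pk k ((a x - b' x) / D)) / 2); split.
  apply: netF_mul; last exact: netF_const.
  apply: netF_add; first exact: netF_add.
  apply: netF_mul; first exact: netF_const.
  apply: netF_pk; apply: netF_mul; last exact: netF_const.
  apply: netF_add => //.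
  apply: (@netF_ext _ _ (fun x => (-1) * b' x)); last by move=> x; rewrite mulN1r.
  by apply: netF_mul => //; exact: netF_const.
move=> x Ax.
have [ha hbx] := hab x Ax.
have h1 := hb' x Ax.
set u := (a x - b' x) / D.
have hu : `|u| <= 1.
  have hD : 0 <= D^-1 by rewrite invr_ge0 ltW.
  rewrite /u normrM (ger0_norm hD).
  rewrite ler_pdivrMr // mul1r.
  apply: (le_trans (ler_distD (b x) _ _)).
  have : `|b x - b' x| <= eta / 2 by rewrite distrC.
  have : `|a x - b x| <= `|a x| + `|b x| by apply: ler_normB.
  rewrite /D; lra.
have h2 := hk u hu.
have h4 : `|a x - b' x| = D * `|u|.
  have hD : 0 <= D^-1 by rewrite invr_ge0 ltW.
  rewrite /u normrM (ger0_norm hD).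
  by rewrite mulrCA (mulfV (lt0r_neq0 D0)) mulr1.
have h3 : `| `|a x - b' x| - `|a x - b x| | <= `|b' x - b x|.
  apply: le_trans (ler_dist_dist _ _) _.
  by rewrite opprB addrC addrA subrK distrC.
rewrite maxE2.
move: h1 h2 h3; rewrite !ler_norml h4 => /andP[h1 h1'] /andP[h2 h2'] /andP[h3 h3'].
have h5 : - eta <= D * pk k u - D * `|u| <= eta.
  have -> : eta = D * (eta / D) by field; lra.
  rewrite -mulrBr -mulrN; apply/andP; split; apply: ler_wpM2l; lra.
move: h5 => /andP[h5 h5'].
have h6 : `|b' x - b x| <= eta / 2 := hb' x Ax.
apply/andP; split; lra.
Qed.

End Main1.


Section Main2.
Variable R : realType.
Variable n : nat.
Implicit Types (x y : 'cV[R]_n).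

Definition Hmax (g : 'cV[R]_n -> 'cV[R]_n -> R) y0 (s : seq 'cV[R]_n) x :=
  foldr (fun y acc => Num.max (g y x) acc) (g y0 x) s.

Lemma max_bound (p q C : R) : `|p| <= C -> `|q| <= C -> `|Num.max p q| <= C.
Proof. by move=> hp hq; have [] := leP p q. Qed.

Lemma Hmax_bound g y0 s x C : (forall y, y \in y0 :: s -> `|g y x| <= C) -> `|Hmax g y0 s x| <= C.
Proof.
elim: s => [|y s IH] H /=; first by apply: H; rewrite mem_head.
apply: max_bound; first by apply: H; rewrite !inE eqxx orbT.
apply: IH => z; rewrite inE => /orP[/eqP->|zs]; first by apply: H; rewrite mem_head.
by apply: H; rewrite !inE zs !orbT.
Qed.

Lemma Hmax_ge g y0 s x y : y \in y0 :: s -> g y x <= Hmax g y0 s x.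
Proof.
elim: s => [|z s IH] /=; first by rewrite inE => /eqP->.
rewrite in_cons le_max => /orP[yy0|]; first by rewrite IH ?orbT // in_cons yy0.
rewrite in_cons => /orP[/eqP->|ys]; first by rewrite lexx.
by rewrite IH ?orbT // in_cons ys orbT.
Qed.

Lemma Hmax_le g y0 s x U : (forall y, y \in y0 :: s -> g y x <= U) -> Hmax g y0 s x <= U.
Proof.
elim: s => [|y s IH] H /=; first by apply: H; rewrite mem_head.
rewrite ge_max; apply/andP; split; first by apply: H; rewrite !inE eqxx orbT.
apply: IH => z; rewrite inE => /orP[/eqP->|zs]; first by apply: H; rewrite mem_head.
by apply: H; rewrite !inE zs !orbT.
Qed.

Lemma list_max (A : set 'cV[R]_n) g y0 s C :
  0 <= C -> (forall y, netF (g y)) ->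
  (forall y x, y \in y0 :: s -> A x -> `|g y x| <= C) ->
  forall eta, 0 < eta -> eta <= 1 ->
  exists F, netF F /\ forall x, A x -> `|F x - Hmax g y0 s x| <= eta.
Proof.
move=> C0 ng; elim: s => [|y s IH] hC eta e0 e1.
  by exists (g y0); split => // x Ax; rewrite /Hmax /= subrr normr0 ltW.
have := @max_step R n A (g y) (Hmax g y0 s) C eta (ng y) e0 e1 C0.
apply.
  move=> x Ax; split; first by apply: hC; rewrite ?inE ?eqxx ?orbT.
  apply: Hmax_bound => z zs; apply: hC => //.
  by move: zs; rewrite !inE => /orP[->|->]; rewrite ?orbT.
move=> eta' e0' e1'; apply: IH => // z x zs Ax; apply: hC => //.
by move: zs; rewrite !inE => /orP[->|->]; rewrite ?orbT.
Qed.

Lemma le_sum_seq (s : seq 'cV[R]_n) (F : 'cV[R]_n -> R) y :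
  (forall z, 0 <= F z) -> y \in s -> F y <= \sum_(z <- s) F z.
Proof.
move=> F0; elim: s => [|z s IH] //; rewrite inE big_cons => /orP[/eqP->|ys].
  by rewrite lerDl sumr_ge0.
by apply: le_trans (IH ys) _; rewrite lerDr.
Qed.

Lemma netF_g (c M : R) y :
  netF (fun x => c - M * \sum_(i < n) (x i ord0 - y i ord0) * (x i ord0 - y i ord0)).
Proof.
apply: netF_add; first exact: netF_const.
apply: (@netF_ext _ _ (fun x => (- M) * \sum_(i < n) (x i ord0 - y i ord0) * (x i ord0 - y i ord0))); last by move=> x; rewrite mulNr.
apply: netF_mul; first exact: netF_const.
apply: netF_sum => i.
by apply: netF_mul; apply: netF_add; try exact: netF_coord; exact: netF_const.
Qed.

End Main2.


Lemma sq_abs (R : realType) (t : R) : t * t = `|t| * `|t|.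
Proof. by rewrite -normrM ger0_norm // -expr2 sqr_ge0. Qed.

Lemma sumc (R : realType) n (c : R) : \sum_(i < n) c = n%:R * c.
Proof. by rewrite sumr_const card_ord mulr_natl. Qed.

Lemma core (R : realType) n (K : set 'cV[R]_n) (f : 'cV[R]_n -> R) (e : R) :
  compact K -> {within K, continuous f} -> 0 < e ->
  exists F, netF F /\ forall x, K x -> `|F x - f x| <= 3 * e.
Proof.
move=> cK fc e0.
have [[y0 Ky0]|K0] := pselect (exists y, K y); last first.
  exists (fun _ => 0); split; first exact: netF_const.
  by move=> x Kx; exfalso; apply: K0; exists x.
have [B [B0 HB]] : exists B, 0 < B /\ forall x, K x -> `|f x| <= B.
  have := compact_bounded (continuous_compact fc cK).
  case=> B1 [_ HB1]; exists (`|B1| + 1); split.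
    by apply: (lt_le_trans ltr01); rewrite lerDr.
  move=> x Kx; apply: (HB1 (`|B1| + 1)); last by exists x.
  by apply: (le_lt_trans (ler_norm B1)); rewrite ltrDl.
have [R1 [R10 HR1]] : exists R1, 0 < R1 /\ forall x i, K x -> `|x i ord0| <= R1.
  have := compact_bounded cK; case=> R0 [_ HR0].
  exists (`|R0| + 2); split.
    by apply: (lt_le_trans (_ : 0 < 2)) => //; rewrite lerDr.
  move=> x i Kx.
  have hx : `|x| <= `|R0| + 1.
    apply: (HR0 (`|R0| + 1)) => //.
    by apply: (le_lt_trans (ler_norm R0)); rewrite ltrDl.
  have : ball (0 : 'cV[R]_n) (`|R0| + 2) x.
    by rewrite -ball_normE /ball_ /= sub0r normrN; lra.
  by move/ball_entries => [_ /(_ i)]; rewrite mxE sub0r normrN => /ltW.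
have /choice [d Hd] : forall y : 'cV[R]_n, exists dd : R,
    0 < dd /\ (K y -> forall x, K x -> ball y dd x -> `|f x - f y| < e).
  move=> y; have [Ky|nKy] := pselect (K y).
    by have [dd dd0 H] := @cont_delta R n K f y e fc Ky e0; exists dd.
  by exists 1; split => // /nKy.
pose M y := 2 * B / (d y * d y).
have M0 y : 0 < M y.
  have := (Hd y).1 => dy0; rewrite /M divr_gt0 //; [lra| exact: mulr_gt0].
pose r y := Num.min 1 (Num.min (d y) (e / ((n%:R + 1) * M y))).
have r0 y : 0 < r y.
  have := (Hd y).1 => dy0.
  have hn1 : (0:R) < n%:R + 1 by have : (0:R) <= n%:R by []; lra.
  by rewrite /r !lt_min ltr01 dy0 /= divr_gt0 // mulr_gt0.
have [D' D'K cov] : finite_subset_cover K (fun y => ball y (r y)) K.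
  move: cK; rewrite compact_cover => cK; apply: cK.
    by move=> y _; apply: ball_open.
  by move=> x Kx; exists x => //; apply: ballxx.
pose s : seq 'cV[R]_n := D'.
have sD y : y \in s -> K y.
  by move=> ys; apply: set_mem; apply: D'K.
have Kyl y : y \in y0 :: s -> K y by rewrite in_cons => /orP[/eqP->|/sD].
pose S (x y : 'cV[R]_n) : R := \sum_(i < n) (x i ord0 - y i ord0) * (x i ord0 - y i ord0).
have S0 x y : 0 <= S x y by apply: sumr_ge0 => i _; rewrite -expr2 sqr_ge0.
pose g (y x : 'cV[R]_n) : R := f y - M y * S x y.
have ng y : netF (g y) by apply: netF_g.
pose C := B + (\sum_(z <- y0 :: s) M z) * (n%:R * (2 * R1) ^+ 2).
have C0 : 0 <= C.
  rewrite /C addr_ge0 ?(ltW B0) // mulr_ge0 //; first by apply: sumr_ge0 => z _; apply: ltW.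
  by rewrite mulr_ge0 // exprn_ge0 // mulr_ge0 // ltW.
have hgC y x : y \in y0 :: s -> K x -> `|g y x| <= C.
  move=> ys Kx; have Ky := Kyl y ys.
  have hS : S x y <= n%:R * (2 * R1) ^+ 2.
    rewrite /S; apply: le_trans (_ : _ <= \sum_(i < n) (2 * R1) ^+ 2) _.
      apply: ler_sum => i _.
      have ht : `|x i ord0 - y i ord0| <= 2 * R1.
        apply: le_trans (ler_normB _ _) _.
        have := HR1 x i Kx; have := HR1 y i Ky; lra.
      rewrite sq_abs expr2; apply: ler_pM => //.
    by rewrite sumc.
  have hM : M y <= \sum_(z <- y0 :: s) M z.
    by apply: le_sum_seq => // z; apply: ltW.
  have hMS : M y * S x y <= (\sum_(z <- y0 :: s) M z) * (n%:R * (2 * R1) ^+ 2).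
    by apply: ler_pM => //; apply: ltW.
  have hMS0 : 0 <= M y * S x y by apply: mulr_ge0 => //; apply: ltW.
  have := HB y Ky; rewrite /g /C !ler_norml => /andP[h1 h2].
  apply/andP; split; lra.
pose eta := Num.min e 1.
have eta0 : 0 < eta by rewrite lt_min e0 ltr01.
have eta1 : eta <= 1 by rewrite ge_min lexx orbT.
have etae : eta <= e by rewrite ge_min lexx.
have [F [nF HF]] := list_max C0 ng hgC eta0 eta1.
exists F; split => // x Kx.
have up : Hmax g y0 s x <= f x + e.
  apply: Hmax_le => y ys; have Ky := Kyl y ys.
  have hMS0 : 0 <= M y * S x y by apply: mulr_ge0 => //; apply: ltW.
  have [bxy|nb] := pselect (ball y (d y) x).
    have := (Hd y).2 Ky x Kx bxy; rewrite ltr_norml => /andP[h1 h2].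
    rewrite /g; lra.
  have hd := (Hd y).1.
  have [i hi] : exists i, d y <= `|y i ord0 - x i ord0|.
    apply: contrapT => H; apply: nb; apply/(@ball_entries R n); split => // i.
    by rewrite ltNge; apply/negP => hi; apply: H; exists i.
  have hSi : d y * d y <= S x y.
    rewrite /S (bigD1 i) //=.
    apply: le_trans (_ : _ <= (x i ord0 - y i ord0) * (x i ord0 - y i ord0)) _.
      rewrite [in X in _ <= X]sq_abs distrC.
      by apply: ler_pM; [exact: ltW | exact: ltW | exact: hi | exact: hi].
    by rewrite lerDl; apply: sumr_ge0 => j _; rewrite -expr2 sqr_ge0.
  have hM2 : M y * (d y * d y) = 2 * B.
    by rewrite /M -mulrA mulVf ?mulr1 // mulf_neq0 // lt0r_neq0.
  have : 2 * B <= M y * S x y by rewrite -hM2; apply: ler_wpM2l => //; apply: ltW.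
  have := HB x Kx; have := HB y Ky; rewrite !ler_norml => /andP[? ?] /andP[? ?].
  rewrite /g; lra.
have lo : f x - 2 * e <= Hmax g y0 s x.
  have [z yD bxy] := cov x Kx.
  have ys : z \in y0 :: s by rewrite in_cons yD orbT.
  apply: le_trans (Hmax_ge g x ys).
  have Ky := Kyl z ys.
  have hrd : r z <= d z by rewrite /r !ge_min lexx !orbT.
  have bd : ball z (d z) x by apply: le_ball hrd _ bxy.
  have := (Hd z).2 Ky x Kx bd; rewrite ltr_norml => /andP[h1 h2].
  have hr0 := r0 z.
  have hSr : S x z <= n%:R * (r z * r z).
    rewrite /S -sumc; apply: ler_sum => i _.
    move: bxy => /(@ball_entries R n) [_ /(_ i)] hi.
    by rewrite sq_abs distrC; apply: ler_pM => //; apply: ltW.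
  have hr1 : r z <= 1 by rewrite /r ge_min lexx.
  have hrq : r z <= e / ((n%:R + 1) * M z) by rewrite /r !ge_min lexx !orbT.
  have hn0 : (0:R) <= n%:R by [].
  have hpos : 0 < (n%:R + 1) * M z by apply: mulr_gt0 => //; lra.
  have hMr : (n%:R + 1) * M z * r z <= e.
    apply: le_trans (ler_wpM2l (ltW hpos) hrq) _.
    by rewrite mulrC divfK // lt0r_neq0.
  have hM := M0 z.
  have hrr1 : r z * r z <= r z.
    by rewrite -[X in _ <= X]mulr1; apply: ler_wpM2l; [exact: ltW|].
  have hrr2 : n%:R * (r z * r z) <= n%:R * r z by apply: ler_wpM2l.
  have hrr : n%:R * (r z * r z) <= (n%:R + 1) * r z.
    by apply: le_trans hrr2 _; rewrite mulrDl mul1r lerDl ltW.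
  have : M z * S x z <= M z * ((n%:R + 1) * r z).
    apply: ler_wpM2l; [exact: ltW | exact: le_trans hSr hrr].
  rewrite mulrA [M z * _]mulrC /g; lra.
have := HF x Kx; rewrite !ler_norml => /andP[h1 h2].
apply/andP; split; lra.
Qed.

Theorem mainTheorem7 (R : realType) (n m : nat) (hn : (0 < n)%N) (hm : (0 < m)%N)
  (K : set 'cV[R]_n) (f : 'cV[R]_n -> R) (eps : R) :
  compact K -> {within K, continuous f} -> 0 < eps ->
  exists (g1 : icnn R m) (sigma : R -> R) (g2 : ffn R m n),
    [/\ icnn_nonneg g1, sm_activation sigma &
        (ereal_sup [set (`| icnn_eval g1 (ffn_eval sigma g2 x) - f x |)%:E | x in K]
           < eps%:E)%E ].
Proof.
move=> cK fc eps0.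
case: m hm => // m' _.
suff [F [[N HN] HF]] : exists F, netF F /\ forall x, K x -> `|F x - f x| <= eps / 2.
  exists (icnn_single false (delta_mx ord0 ord0 : 'M[R]_(1, m'.+1)) 0), (@sq R).
  exists (ffn_comp (ffn_out (const_mx 1 : 'M[R]_(m'.+1, 1)) 0) N).
  split => //; first exact: sq_act.
  apply: (@le_lt_trans _ _ (eps / 2)%:E); last by rewrite lte_fin; lra.
  apply: ge_ereal_sup => _ [x Kx <-]; rewrite lee_fin.
  rewrite /icnn_eval /opt_relu eval_comp /= !addr0 -rowE !mxE big_ord1 mxE mul1r.
  by rewrite HN; apply: HF.
have [F [nF HF]] := @core R n K f (eps / 6) cK fc ltac:(lra).
by exists F; split => // x Kx; have := HF x Kx; lra.
Qed.
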